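(* Let $H$ be a real Hilbert space, $A:H\to H$ bounded linear, $f\in H$ such that $Au=f$ is solvable, and $y$ the minimal-norm solution ($Ay=f$, $y\perp\mathcal N(A)$). Let $P:H\to H$ be bounded linear with $T:=PA$ selfadjoint, $T\ge0$, and $\mathcal N(T)=\mathcal N(A)$. Let $u_0\in H$ with $u_0-y\perp\mathcal N(A)$. For each $\delta>0$ let $f_\delta\in H$ satisfy $\|f_\delta-f\|\le\delta$, and let $u_\delta(t)$ be the solution of $$\dot u_\delta(t)=-P(Au_\delta(t)-f_\delta),\qquad u_\delta(0)=u_0.$$ If $t_\delta>0$ satisfy $\lim_{\delta\to0}t_\delta=\infty$ and $\lim_{\delta\to0}t_\delta\delta=0$, then $\lim_{\delta\to0}\|u_\delta(t_\delta)-y\|=0$. In particular this holds for $t_\delta=C\delta^{-\gamma}$ with constants $C>0$, $\gamma\in(0,1)$.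
   Context: $\mathcal N(A)=\{u\in H:Au=0\}$. *)

(* Defs.v *)
From Stdlib Require Import Reals Lra.
Open Scope R_scope.

Record HilbertSpace := {
  hcar :> Type;
  hzero : hcar;
  hadd : hcar -> hcar -> hcar;
  hopp : hcar -> hcar;
  hscal : R -> hcar -> hcar;
  hinner : hcar -> hcar -> R;
  haddA : forall x y z, hadd x (hadd y z) = hadd (hadd x y) z;
  haddC : forall x y, hadd x y = hadd y x;
  hadd0 : forall x, hadd x hzero = x;
  haddN : forall x, hadd x (hopp x) = hzero;
  hscal1 : forall x, hscal 1 x = x;
  hscalA : forall a b x, hscal a (hscal b x) = hscal (a * b) x;
  hscalDr : forall a x y, hscal a (hadd x y) = hadd (hscal a x) (hscal a y);
  hscalDl : forall a b x, hscal (a + b) x = hadd (hscal a x) (hscal b x);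
  hinnerC : forall x y, hinner x y = hinner y x;
  hinnerD : forall x y z, hinner (hadd x y) z = hinner x z + hinner y z;
  hinnerZ : forall a x y, hinner (hscal a x) y = a * hinner x y;
  hinner_ge0 : forall x, 0 <= hinner x x;
  hinner_eq0 : forall x, hinner x x = 0 -> x = hzero;
  hcomplete : forall s : nat -> hcar,
    (forall eps, 0 < eps -> exists N, forall m n, (N <= m)%nat -> (N <= n)%nat ->
       sqrt (hinner (hadd (s m) (hopp (s n))) (hadd (s m) (hopp (s n)))) < eps) ->
    exists l, forall eps, 0 < eps -> exists N, forall n, (N <= n)%nat ->
       sqrt (hinner (hadd (s n) (hopp l)) (hadd (s n) (hopp l))) < eps
}.

Arguments hzero {_}. Arguments hadd {_}. Arguments hopp {_}.
Arguments hscal {_}. Arguments hinner {_}.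

Definition hsub {H : HilbertSpace} (x y : H) : H := hadd x (hopp y).
Definition hnorm {H : HilbertSpace} (x : H) : R := sqrt (hinner x x).

Definition bounded_linear {H : HilbertSpace} (A : H -> H) : Prop :=
  (forall x y, A (hadd x y) = hadd (A x) (A y)) /\
  (forall a x, A (hscal a x) = hscal a (A x)) /\
  (exists M, forall x, hnorm (A x) <= M * hnorm x).

Definition selfadjoint {H : HilbertSpace} (T : H -> H) : Prop :=
  forall x y, hinner (T x) y = hinner x (T y).

Definition nonneg_op {H : HilbertSpace} (T : H -> H) : Prop :=
  forall x, 0 <= hinner (T x) x.

Definition nullsp {H : HilbertSpace} (A : H -> H) (u : H) : Prop := A u = hzero.

Definition orth {H : HilbertSpace} (x : H) (S : H -> Prop) : Prop :=
  forall z, S z -> hinner x z = 0.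

Definition has_deriv_on_nonneg {H : HilbertSpace} (u : R -> H) (t : R) (v : H) : Prop :=
  forall eps, 0 < eps -> exists d, 0 < d /\
    forall h, h <> 0 -> Rabs h < d -> 0 <= t + h ->
      hnorm (hsub (hscal (/ h) (hsub (u (t + h)) (u t))) v) <= eps.

Definition solves_ode {H : HilbertSpace} (P A : H -> H) (g u0 : H) (u : R -> H) : Prop :=
  u 0 = u0 /\
  forall t, 0 <= t -> has_deriv_on_nonneg u t (hopp (P (hsub (A (u t)) g))).

Definition lim0_to_infty (t : R -> R) : Prop :=
  forall M, exists d, 0 < d /\ forall delta, 0 < delta < d -> M < t delta.

Definition lim0_to_0 (g : R -> R) : Prop :=
  forall eps, 0 < eps -> exists d, 0 < d /\ forall delta, 0 < delta < d -> Rabs (g delta) < eps.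

(* Main.v *)
Require Import Defs.
From Stdlib Require Import Reals Lra Psatz ClassicalEpsilon.
Open Scope R_scope.

Section V.
Context {H : HilbertSpace}.
Implicit Types x y z : H.

Lemma ip_addr x y z : hinner x (hadd y z) = hinner x y + hinner x z.
Proof. rewrite hinnerC, hinnerD, (hinnerC _ y), (hinnerC _ z); reflexivity. Qed.
Lemma ip_scalr a x y : hinner x (hscal a y) = a * hinner x y.
Proof. rewrite hinnerC, hinnerZ, hinnerC; reflexivity. Qed.
Lemma ip_0l y : hinner (@hzero H) y = 0.
Proof.
  assert (E: hinner (hadd (@hzero H) hzero) y = hinner (@hzero H) y) by (rewrite hadd0; auto).
  rewrite hinnerD in E; lra.
Qed.
Lemma ip_0r y : hinner y (@hzero H) = 0.
Proof. rewrite hinnerC; apply ip_0l. Qed.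
Lemma ip_oppl x y : hinner (hopp x) y = - hinner x y.
Proof.
  assert (E: hinner (hadd x (hopp x)) y = 0) by (rewrite haddN; apply ip_0l).
  rewrite hinnerD in E; lra.
Qed.
Lemma ip_oppr x y : hinner y (hopp x) = - hinner y x.
Proof. rewrite hinnerC, ip_oppl, hinnerC; reflexivity. Qed.
Lemma ip_subl x y z : hinner (hsub x y) z = hinner x z - hinner y z.
Proof. unfold hsub; rewrite hinnerD, ip_oppl; ring. Qed.
Lemma ip_subr x y z : hinner z (hsub x y) = hinner z x - hinner z y.
Proof. unfold hsub; rewrite ip_addr, ip_oppr; ring. Qed.

Lemma veq x y : (forall z, hinner x z = hinner y z) -> x = y.
Proof.
  intros E.
  assert (Z: hadd x (hopp y) = hzero).
  { apply hinner_eq0. rewrite hinnerD, ip_oppl, E. ring. }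
  rewrite <- (hadd0 _ x), <- (haddN _ y), (haddC _ y (hopp y)), haddA, Z,
    haddC, hadd0. reflexivity.
Qed.

Lemma hnorm_ge0 x : 0 <= hnorm x.
Proof. apply sqrt_pos. Qed.
Lemma hnorm_sq x : hnorm x * hnorm x = hinner x x.
Proof. apply sqrt_sqrt, hinner_ge0. Qed.

Lemma quad_disc a b c : 0 <= a -> 0 <= c ->
  (forall s, 0 <= a - 2 * s * b + s * s * c) -> b * b <= a * c.
Proof.
  intros Ha Hc Q.
  destruct (Req_dec c 0) as [C0|Cn].
  - subst c. destruct (Req_dec b 0) as [B0|Bn]. subst; lra.
    specialize (Q ((a+1)/(2*b))).
    replace (a - 2 * ((a + 1) / (2 * b)) * b + (a + 1) / (2 * b) * ((a + 1) / (2 * b)) * 0)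
      with (-1) in Q by (field; auto). lra.
  - specialize (Q (b / c)).
    replace (a - 2 * (b / c) * b + b / c * (b / c) * c) with (a - b*b/c) in Q by (field; auto).
    assert (0 < c) by lra.
    apply Rmult_le_compat_r with (r:=c) in Q; [|lra].
    replace ((a - b * b / c) * c) with (a*c - b*b) in Q by (field; auto). lra.
Qed.

Lemma cs_sq x y : hinner x y * hinner x y <= hinner x x * hinner y y.
Proof.
  apply quad_disc; try apply hinner_ge0.
  intros s. assert (K := hinner_ge0 _ (hsub x (hscal s y))).
  rewrite ip_subl, !ip_subr, !hinnerZ, !ip_scalr, (hinnerC _ y x) in K. nra.
Qed.

Lemma cs x y : Rabs (hinner x y) <= hnorm x * hnorm y.
Proof.
  unfold hnorm. rewrite <- sqrt_mult by apply hinner_ge0.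
  rewrite <- sqrt_Rsqr_abs. apply sqrt_le_1_alt. unfold Rsqr. apply cs_sq.
Qed.
Lemma cs1 x y : hinner x y <= hnorm x * hnorm y.
Proof. pose proof (cs x y). pose proof (Rle_abs (hinner x y)). lra. Qed.
Lemma cs2 x y : - (hnorm x * hnorm y) <= hinner x y.
Proof. pose proof (cs x y). pose proof (Rle_abs (- hinner x y)). rewrite Rabs_Ropp in H1. lra. Qed.

Lemma norm_le_sq x r : 0 <= r -> hinner x x <= r * r -> hnorm x <= r.
Proof. intros Hr Hx. unfold hnorm. rewrite <- (sqrt_square r) by auto. apply sqrt_le_1_alt; auto. Qed.
Lemma norm_lt_sq x r : 0 <= r -> hinner x x < r * r -> hnorm x < r.
Proof. intros Hr Hx. unfold hnorm. rewrite <- (sqrt_square r) by auto. apply sqrt_lt_1_alt; split; auto; apply hinner_ge0. Qed.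

Lemma tri x y : hnorm (hadd x y) <= hnorm x + hnorm y.
Proof.
  apply norm_le_sq. pose proof (hnorm_ge0 x); pose proof (hnorm_ge0 y); lra.
  rewrite hinnerD, !ip_addr. pose proof (cs1 x y). rewrite (hinnerC _ y x).
  rewrite <- !hnorm_sq. nra.
Qed.
Lemma norm_scal a x : hnorm (hscal a x) = Rabs a * hnorm x.
Proof.
  unfold hnorm. rewrite hinnerZ, ip_scalr, <- Rmult_assoc, sqrt_mult.
  - rewrite <- sqrt_Rsqr_abs. reflexivity.
  - apply Rle_0_sqr.
  - apply hinner_ge0.
Qed.

End V.

Ltac ipexp := repeat (rewrite ?ip_subl, ?ip_subr, ?hinnerD, ?ip_addr, ?hinnerZ, ?ip_scalr, ?ip_oppl, ?ip_oppr, ?ip_0l, ?ip_0r).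

Ltac ipexp_in h := repeat (first [rewrite ip_subl in h | rewrite ip_subr in h | rewrite hinnerD in h
  | rewrite ip_addr in h | rewrite hinnerZ in h | rewrite ip_scalr in h | rewrite ip_oppl in h
  | rewrite ip_oppr in h | rewrite ip_0l in h | rewrite ip_0r in h]).

Section V2.
Context {H : HilbertSpace}.

Lemma norm_sub_self (x : H) : hnorm (hsub x x) = 0.
Proof. unfold hnorm. rewrite ip_subl, !ip_subr. replace (_ - _ - _) with 0 by ring. apply sqrt_0. Qed.
Lemma tri_sub (x y : H) : hnorm x <= hnorm (hsub x y) + hnorm y.
Proof.
  assert (E: x = hadd (hsub x y) y) by (apply veq; intro; ipexp; ring).
  rewrite E at 1. apply tri.
Qed.
Lemma norm_opp (x : H) : hnorm (hopp x) = hnorm x.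
Proof. unfold hnorm. rewrite ip_oppl, ip_oppr. f_equal; ring. Qed.
Lemma tri_sub2 (x y : H) : hnorm (hsub x y) <= hnorm x + hnorm y.
Proof. unfold hsub. rewrite <- (norm_opp y). apply tri. Qed.

Definition hd (a : R -> H) (x : R) (v : H) : Prop :=
  forall eps, 0 < eps -> exists d, 0 < d /\ forall h, h <> 0 -> Rabs h < d ->
    hnorm (hsub (hscal (/ h) (hsub (a (x + h)) (a x))) v) <= eps.
Definition hc (a : R -> H) (x : R) : Prop :=
  forall eps, 0 < eps -> exists d, 0 < d /\ forall s, Rabs (s - x) < d ->
    hnorm (hsub (a s) (a x)) <= eps.

Lemma quot_bound h (D v : H) : h <> 0 ->
  hnorm D <= Rabs h * (hnorm (hsub (hscal (/h) D) v) + hnorm v).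
Proof.
  intros Hh. assert (E: D = hscal h (hscal (/h) D)).
  { rewrite hscalA, Rinv_r, hscal1 by auto. reflexivity. }
  rewrite E at 1. rewrite norm_scal. apply Rmult_le_compat_l. apply Rabs_pos. apply tri_sub.
Qed.

Lemma hd_hc (a : R -> H) (x : R) (v : H) : hd a x v -> hc a x.
Proof.
  intros D eps He. destruct (D 1 Rlt_0_1) as [d1 [Hd1 Q]].
  pose proof (hnorm_ge0 v).
  exists (Rmin d1 (eps / (hnorm v + 1))). split.
  { apply Rmin_pos; auto. apply Rdiv_lt_0_compat; lra. }
  intros s Hs. destruct (Req_dec s x) as [->|Hn].
  { rewrite norm_sub_self; lra. }
  assert (Hh: s - x <> 0) by lra.
  pose proof (Rmin_l d1 (eps / (hnorm v + 1))). pose proof (Rmin_r d1 (eps / (hnorm v + 1))).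
  specialize (Q (s - x) Hh ltac:(lra)). replace (x + (s - x)) with s in Q by ring.
  eapply Rle_trans. apply (quot_bound (s - x) _ v); auto.
  apply Rle_trans with (Rabs (s - x) * (hnorm v + 1)).
  apply Rmult_le_compat_l. apply Rabs_pos. lra.
  apply Rle_trans with (eps / (hnorm v + 1) * (hnorm v + 1)).
  apply Rmult_le_compat_r; lra. right; field; lra.
Qed.

Lemma cont_eps (f : R -> R) (x : R) :
  (forall eps, 0 < eps -> exists d, 0 < d /\ forall s, Rabs (s - x) < d -> Rabs (f s - f x) < eps) ->
  continuity_pt f x.
Proof.
  intros C eps He. destruct (C eps He) as [d [Hd Q]]. exists d; split; auto.
  intros s [_ Hs]. apply Q. exact Hs.
Qed.

Lemma ip_cont (a b : R -> H) (x : R) : hc a x -> hc b x -> continuity_pt (fun s => hinner (a s) (b s)) x.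
Proof.
  intros Ca Cb. apply cont_eps. intros eps He.
  set (K := hnorm (a x) + hnorm (b x) + 1).
  assert (HK: 0 < K) by (unfold K; pose proof (hnorm_ge0 (a x)); pose proof (hnorm_ge0 (b x)); lra).
  set (e1 := Rmin 1 (eps / (3 * K))).
  assert (He1: 0 < e1) by (apply Rmin_pos; [lra| apply Rdiv_lt_0_compat; lra]).
  destruct (Ca e1 He1) as [da [Hda Qa]]. destruct (Cb e1 He1) as [db [Hdb Qb]].
  exists (Rmin da db). split. apply Rmin_pos; auto.
  intros s Hs. pose proof (Rmin_l da db); pose proof (Rmin_r da db).
  specialize (Qa s ltac:(lra)). specialize (Qb s ltac:(lra)).
  assert (E: hinner (a s) (b s) - hinner (a x) (b x) =
    hinner (hsub (a s) (a x)) (b s) + hinner (a x) (hsub (b s) (b x))) by (ipexp; ring).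
  rewrite E. eapply Rle_lt_trans. apply Rabs_triang.
  pose proof (cs (hsub (a s) (a x)) (b s)). pose proof (cs (a x) (hsub (b s) (b x))).
  pose proof (tri_sub (b s) (b x)).
  pose proof (hnorm_ge0 (hsub (a s) (a x))). pose proof (hnorm_ge0 (a x)). pose proof (hnorm_ge0 (b x)).
  assert (E1a: e1 <= 1) by apply Rmin_l. assert (E1b: e1 <= eps/(3*K)) by apply Rmin_r.
  assert (E3: eps / (3*K) * K = eps/3) by (field; lra).
  assert (hnorm (b s) <= K) by (unfold K; lra).
  assert (hnorm (hsub (a s) (a x)) * hnorm (b s) <= e1 * K) by (apply Rmult_le_compat; auto; apply hnorm_ge0).
  assert (hnorm (a x) * hnorm (hsub (b s) (b x)) <= K * e1) by (apply Rmult_le_compat; auto; try apply hnorm_ge0; unfold K; lra).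
  assert (e1 * K <= eps / 3) by (rewrite <- E3; apply Rmult_le_compat_r; lra).
  lra.
Qed.

Lemma ip_deriv (a b : R -> H) (x : R) (va vb : H) :
  hd a x va -> hd b x vb ->
  derivable_pt_lim (fun s => hinner (a s) (b s)) x (hinner va (b x) + hinner (a x) vb).
Proof.
  intros Da Db eps He.
  assert (Cb := hd_hc _ _ _ Db).
  set (K := hnorm va + hnorm (a x) + hnorm (b x) + 1).
  pose proof (hnorm_ge0 va). pose proof (hnorm_ge0 (a x)). pose proof (hnorm_ge0 (b x)).
  assert (HK: 0 < K) by (unfold K; lra).
  set (e1 := Rmin 1 (eps / (4 * K))).
  assert (He1: 0 < e1) by (apply Rmin_pos; [lra| apply Rdiv_lt_0_compat; lra]).
  assert (E1a: e1 <= 1) by apply Rmin_l. assert (E1b: e1 <= eps/(4*K)) by apply Rmin_r.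
  assert (E3: eps / (4*K) * K = eps/4) by (field; lra).
  destruct (Da e1 He1) as [da [Hda Qa]]. destruct (Db e1 He1) as [db [Hdb Qb]].
  destruct (Cb e1 He1) as [dc [Hdc Qc]].
  assert (Hd: 0 < Rmin da (Rmin db dc)) by (repeat apply Rmin_pos; auto).
  exists (mkposreal _ Hd). intros h Hh Hhd. simpl in Hhd.
  pose proof (Rmin_l da (Rmin db dc)). pose proof (Rmin_r da (Rmin db dc)).
  pose proof (Rmin_l db dc). pose proof (Rmin_r db dc).
  specialize (Qa h Hh ltac:(lra)). specialize (Qb h Hh ltac:(lra)).
  specialize (Qc (x + h) ltac:(replace (x + h - x) with h by ring; lra)).
  set (Qa' := hsub (hscal (/ h) (hsub (a (x + h)) (a x))) va) in *.
  set (Qb' := hsub (hscal (/ h) (hsub (b (x + h)) (b x))) vb) in *.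
  assert (E: (hinner (a (x + h)) (b (x + h)) - hinner (a x) (b x)) / h -
     (hinner va (b x) + hinner (a x) vb) =
     hinner Qa' (b (x + h)) + hinner va (hsub (b (x+h)) (b x)) + hinner (a x) Qb').
  { unfold Qa', Qb'. ipexp. field. auto. }
  rewrite E.
  eapply Rle_lt_trans. apply Rabs_triang.
  eapply Rle_lt_trans. apply Rplus_le_compat_r. apply Rabs_triang.
  pose proof (cs Qa' (b (x + h))). pose proof (cs va (hsub (b (x + h)) (b x))).
  pose proof (cs (a x) Qb').
  pose proof (tri_sub (b (x+h)) (b x)).
  pose proof (hnorm_ge0 Qa'). pose proof (hnorm_ge0 Qb'). pose proof (hnorm_ge0 (hsub (b (x + h)) (b x))).
  assert (hnorm (b (x+h)) <= K) by (unfold K; lra).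
  assert (hnorm Qa' * hnorm (b (x+h)) <= e1 * K) by (apply Rmult_le_compat; auto; apply hnorm_ge0).
  assert (hnorm va * hnorm (hsub (b (x + h)) (b x)) <= K * e1) by (apply Rmult_le_compat; auto; unfold K; lra).
  assert (hnorm (a x) * hnorm Qb' <= K * e1) by (apply Rmult_le_compat; auto; unfold K; lra).
  assert (e1 * K <= eps / 4) by (rewrite <- E3; apply Rmult_le_compat_r; lra).
  lra.
Qed.

Lemma hd_aff (a : R -> H) (al be x : R) (v : H) : al <> 0 ->
  hd a (al * x + be) v -> hd (fun s => a (al * s + be)) x (hscal al v).
Proof.
  intros Hal D eps He.
  assert (Ha: 0 < Rabs al) by (apply Rabs_pos_lt; auto).
  destruct (D (eps / Rabs al) ltac:(apply Rdiv_lt_0_compat; lra)) as [d [Hd Q]].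
  exists (d / Rabs al). split. apply Rdiv_lt_0_compat; lra.
  intros h Hh Hhd.
  assert (Hah: al * h <> 0) by (apply Rmult_integral_contrapositive; auto).
  assert (Habs: Rabs (al * h) < d).
  { rewrite Rabs_mult. apply Rmult_lt_compat_l with (r := Rabs al) in Hhd; auto.
    replace (Rabs al * (d / Rabs al)) with d in Hhd by (field; lra). lra. }
  specialize (Q (al * h) Hah Habs).
  replace (al * (x + h) + be) with (al * x + be + al * h) by ring.
  assert (E: hsub (hscal (/ h) (hsub (a (al * x + be + al * h)) (a (al * x + be)))) (hscal al v)
    = hscal al (hsub (hscal (/ (al * h)) (hsub (a (al * x + be + al * h)) (a (al * x + be)))) v)).
  { apply veq; intro z. ipexp. field. auto. }
  rewrite E, norm_scal.
  apply Rmult_le_compat_l with (r := Rabs al) in Q; [|lra].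
  replace (Rabs al * (eps / Rabs al)) with eps in Q by (field; lra). exact Q.
Qed.

Lemma hc_aff (a : R -> H) (al be x : R) :
  hc a (al * x + be) -> hc (fun s => a (al * s + be)) x.
Proof.
  intros C eps He. destruct (C eps He) as [d [Hd Q]].
  pose proof (Rabs_pos al).
  exists (d / (Rabs al + 1)). split. apply Rdiv_lt_0_compat; lra.
  intros s Hs. apply Q.
  replace (al * s + be - (al * x + be)) with (al * (s - x)) by ring.
  rewrite Rabs_mult.
  apply Rle_lt_trans with ((Rabs al + 1) * Rabs (s - x)).
  apply Rmult_le_compat_r. apply Rabs_pos. lra.
  apply Rmult_lt_compat_l with (r := Rabs al + 1) in Hs; [|lra].
  replace ((Rabs al + 1) * (d / (Rabs al + 1))) with d in Hs by (field; lra). lra.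
Qed.

Lemma hd_const (c : H) x : hd (fun _ => c) x hzero.
Proof.
  intros eps He. exists 1. split. lra. intros h _ _.
  assert (E: hsub (hscal (/ h) (hsub c c)) hzero = hsub c c) by (apply veq; intro; ipexp; ring).
  rewrite E, norm_sub_self. lra.
Qed.
Lemma hc_const (c : H) x : hc (fun _ => c) x.
Proof. intros eps He. exists 1. split. lra. intros. rewrite norm_sub_self. lra. Qed.
End V2.

Lemma mono (f l : R -> R) (a b : R) : a <= b ->
  (forall c, a <= c <= b -> continuity_pt f c) ->
  (forall c, a < c < b -> derivable_pt_lim f c (l c)) ->
  (forall c, a < c < b -> 0 <= l c) -> f a <= f b.
Proof.
  intros Hab Cf Df Pl. destruct (Req_dec a b) as [->|Hn]. lra.
  assert (Hlt: a < b) by lra.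
  set (pr1 := fun c (P : a < c < b) => exist (fun l0 => derivable_pt_lim f c l0) (l c) (Df c P)).
  destruct (MVT f id a b pr1 (fun c _ => derivable_pt_id c) Hlt Cf
     (fun c _ => derivable_continuous_pt _ _ (derivable_pt_id c))) as [c [P E]].
  unfold pr1 in E. simpl in E.
  rewrite (derive_pt_eq_0 id c 1 (derivable_pt_id c) (derivable_pt_lim_id c)) in E.
  unfold id in E. pose proof (Pl c P). nra.
Qed.

Lemma dpl_plus f1 f2 x l1 l2 : derivable_pt_lim f1 x l1 -> derivable_pt_lim f2 x l2 ->
  derivable_pt_lim (fun s => f1 s + f2 s) x (l1 + l2).
Proof. intros; exact (derivable_pt_lim_plus _ _ _ _ _ H H0). Qed.
Lemma dpl_mult f1 f2 x l1 l2 : derivable_pt_lim f1 x l1 -> derivable_pt_lim f2 x l2 ->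
  derivable_pt_lim (fun s => f1 s * f2 s) x (l1 * f2 x + f1 x * l2).
Proof. intros; exact (derivable_pt_lim_mult _ _ _ _ _ H H0). Qed.
Lemma dpl_const a x : derivable_pt_lim (fun _ => a) x 0.
Proof. exact (derivable_pt_lim_const a x). Qed.
Lemma dpl_lin k x : derivable_pt_lim (fun s => k * s) x k.
Proof.
  pose proof (derivable_pt_lim_scal id k x 1 (derivable_pt_lim_id x)).
  rewrite Rmult_1_r in H. exact H.
Qed.
Lemma dpl_exp_lin k x : derivable_pt_lim (fun s => exp (k * s)) x (exp (k * x) * k).
Proof.
  exact (derivable_pt_lim_comp (fun s => k * s) exp x k (exp (k*x)) (dpl_lin k x) (derivable_pt_lim_exp _)).
Qed.
Lemma cpt_plus f1 f2 x : continuity_pt f1 x -> continuity_pt f2 x -> continuity_pt (fun s => f1 s + f2 s) x.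
Proof. intros; exact (continuity_pt_plus _ _ _ H H0). Qed.
Lemma cpt_mult f1 f2 x : continuity_pt f1 x -> continuity_pt f2 x -> continuity_pt (fun s => f1 s * f2 s) x.
Proof. intros; exact (continuity_pt_mult _ _ _ H H0). Qed.
Lemma cpt_lin k x : continuity_pt (fun s => k * s) x.
Proof. exact (derivable_continuous_pt _ _ (exist _ k (dpl_lin k x))). Qed.
Lemma cpt_const k x : continuity_pt (fun _ => k) x.
Proof. exact (derivable_continuous_pt _ _ (exist _ 0 (dpl_const k x))). Qed.
Lemma cpt_exp_lin k x : continuity_pt (fun s => exp (k * s)) x.
Proof. exact (derivable_continuous_pt _ _ (exist _ _ (dpl_exp_lin k x))). Qed.
Lemma dpl_opp f x l : derivable_pt_lim f x l -> derivable_pt_lim (fun s => - f s) x (- l).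
Proof. intros; exact (derivable_pt_lim_opp _ _ _ H). Qed.
Lemma cpt_opp f x : continuity_pt f x -> continuity_pt (fun s => - f s) x.
Proof. intros; exact (continuity_pt_opp _ _ H). Qed.

Section ODE.
Context {H : HilbertSpace}.
Variable T : H -> H.
Variable g : H.
Variable G : R.
Variable w : R -> H.
Hypothesis HTs : forall x y, hinner (T x) y = hinner x (T y).
Hypothesis HTn : forall x, 0 <= hinner (T x) x.
Hypothesis Hg : hnorm g <= G.
Hypothesis Hw : forall t, 0 <= t -> has_deriv_on_nonneg w t (hadd (hopp (T (w t))) g).

Definition we s := w (Rmax 0 s).
Definition wd t := hadd (hopp (T (w t))) g.

Lemma we_eq s : 0 <= s -> we s = w s.
Proof. intros; unfold we; rewrite Rmax_right; auto. Qed.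

Lemma we_hd t : 0 < t -> hd we t (wd t).
Proof.
  intros Ht eps He. destruct (Hw t ltac:(lra) eps He) as [d [Hd Q]].
  exists (Rmin d t). split. apply Rmin_pos; auto.
  intros h Hh Hhd. pose proof (Rmin_l d t); pose proof (Rmin_r d t).
  pose proof (Rle_abs (-h)). rewrite Rabs_Ropp in H2.
  rewrite !we_eq by lra. apply Q; auto; lra.
Qed.

Lemma rmax_abs s s' : 0 <= s -> Rabs (Rmax 0 s' - s) <= Rabs (s' - s).
Proof.
  intros Hs. unfold Rmax. destruct (Rle_dec 0 s'). lra.
  rewrite !Rabs_left1 by lra. lra.
Qed.

Lemma we_hc s : hc we s.
Proof.
  destruct (Rle_or_lt 0 s) as [Hs|Hs].
  - intros eps He. destruct (Hw s Hs 1 Rlt_0_1) as [d1 [Hd1 Q]].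
    pose proof (hnorm_ge0 (wd s)).
    exists (Rmin d1 (eps / (hnorm (wd s) + 1))). split.
    { apply Rmin_pos; auto. apply Rdiv_lt_0_compat; lra. }
    intros s' Hs'. unfold we at 2. rewrite Rmax_right by lra. unfold we.
    pose proof (rmax_abs s s' Hs).
    set (s'' := Rmax 0 s') in *.
    assert (Hs0: 0 <= s'') by apply Rmax_l.
    destruct (Req_dec s'' s) as [->|Hn].
    { rewrite norm_sub_self; lra. }
    assert (Hh: s'' - s <> 0) by lra.
    pose proof (Rmin_l d1 (eps / (hnorm (wd s) + 1))). pose proof (Rmin_r d1 (eps / (hnorm (wd s) + 1))).
    specialize (Q (s'' - s) Hh ltac:(lra) ltac:(lra)). replace (s + (s'' - s)) with s'' in Q by ring.
    eapply Rle_trans. apply (quot_bound (s'' - s) _ (wd s)); auto.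
    apply Rle_trans with (Rabs (s'' - s) * (hnorm (wd s) + 1)).
    apply Rmult_le_compat_l. apply Rabs_pos. unfold wd in *. lra.
    apply Rle_trans with (eps / (hnorm (wd s) + 1) * (hnorm (wd s) + 1)).
    apply Rmult_le_compat_r; lra. right; field; lra.
  - intros eps He. exists (- s). split. lra. intros s' Hs'.
    assert (s' < 0) by (pose proof (Rle_abs (s' - s)); lra).
    unfold we. rewrite !Rmax_left by lra. rewrite norm_sub_self; lra.
Qed.

Lemma G_ge0 : 0 <= G.
Proof. pose proof (hnorm_ge0 g); lra. Qed.

Definition N2 t := hinner (w t) (w t).

Lemma deriv_N2 t : 0 < t -> derivable_pt_lim (fun s => hinner (we s) (we s)) t
   (2 * (- hinner (T (w t)) (w t) + hinner g (w t))).
Proof.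
  intros Ht. pose proof (ip_deriv we we t _ _ (we_hd t Ht) (we_hd t Ht)) as D.
  rewrite we_eq in D by lra. unfold wd in D. rewrite ?hinnerD, ?ip_addr, ?ip_oppl, ?ip_oppr in D.
  replace (2 * (- hinner (T (w t)) (w t) + hinner g (w t))) with
    (- hinner (T (w t)) (w t) + hinner g (w t) + (- hinner (w t) (T (w t)) + hinner (w t) g)).
  exact D. rewrite (hinnerC _ (w t) g), <- HTs. ring.
Qed.

Lemma cont_N2 t : continuity_pt (fun s => hinner (we s) (we s)) t.
Proof. apply ip_cont; apply we_hc. Qed.

Lemma gw_bound t : hinner g (w t) <= G * hnorm (w t).
Proof.
  eapply Rle_trans. apply cs1. apply Rmult_le_compat_r. apply hnorm_ge0. auto.
Qed.

Lemma E1 s : 0 <= s -> G * s <= 1 -> N2 s <= 3 * (1 + N2 0).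
Proof.
  intros Hs HGs. pose proof G_ge0 as HG.
  set (psi := fun a => - ((1 + hinner (we a) (we a)) * exp (- G * a))).
  assert (M: psi 0 <= psi s).
  { apply (mono psi (fun a => - ((2 * (- hinner (T (w a)) (w a) + hinner g (w a))) * exp (- G * a)
         + (1 + hinner (we a) (we a)) * (exp (- G * a) * - G)))).
    - lra.
    - intros c _. unfold psi.
      apply (continuity_pt_opp (fun a => ((1 + hinner (we a) (we a)) * exp (- G * a)))).
      apply cpt_mult. apply cpt_plus. apply cpt_const. apply cont_N2. apply cpt_exp_lin.
    - intros c Hc. unfold psi.
      apply (derivable_pt_lim_opp (fun a => ((1 + hinner (we a) (we a)) * exp (- G * a)))).
      apply (dpl_mult (fun a => 1 + hinner (we a) (we a)) (fun a => exp (- G * a))). replace (2 * (- hinner (T (w c)) (w c) + hinner g (w c))) with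
         (0 + 2 * (- hinner (T (w c)) (w c) + hinner g (w c))) by ring.
      apply dpl_plus. apply dpl_const. apply deriv_N2; lra. apply dpl_exp_lin.
    - intros c Hc. rewrite we_eq by lra.
      pose proof (HTn (w c)). pose proof (gw_bound c). pose proof (exp_pos (- G * c)).
      pose proof (hnorm_sq (w c)). pose proof (hnorm_ge0 (w c)).
      assert (2 * hnorm (w c) <= 1 + hinner (w c) (w c)) by (pose proof (Rle_0_sqr (hnorm (w c) - 1)); unfold Rsqr in *; nra).
      assert (2 * (- hinner (T (w c)) (w c) + hinner g (w c)) <= G * (1 + hinner (w c) (w c))) by nra.
      nra. }
  unfold psi in M. rewrite !we_eq in M by lra. rewrite Rmult_0_r, exp_0 in M.
  fold (N2 s) (N2 0) in M.
  assert (E: exp (- G * s) * exp (G * s) = 1) by (rewrite <- exp_plus; replace (- G * s + G * s) with 0 by ring; apply exp_0).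
  assert (exp (G * s) <= 3).
  { eapply Rle_trans; [|apply exp_le_3]. destruct (Req_dec (G*s) 1) as [->|]. lra. left; apply exp_increasing; lra. }
  pose proof (exp_pos (G * s)). pose proof (exp_pos (- G * s)).
  assert (0 <= N2 0) by apply hinner_ge0.
  assert ((1 + N2 s) <= (1 + N2 0) * exp (G * s)).
  { assert (M': (1 + N2 s) * exp (- G * s) <= 1 + N2 0) by lra. clear M. rename M' into M.
    apply Rmult_le_compat_r with (r := exp (G * s)) in M; [|lra].
    replace ((1 + N2 s) * exp (- G * s) * exp (G * s)) with (1 + N2 s) in M by (rewrite Rmult_assoc, E; ring).
    lra. }
  assert ((1+N2 0)*exp(G * s) <= (1+N2 0)*3) by (apply Rmult_le_compat_l; lra).
  lra.
Qed.

Definition B := sqrt (3 * (1 + N2 0)).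
Lemma B_ge0 : 0 <= B.
Proof. apply sqrt_pos. Qed.
Lemma wB s : 0 <= s -> G * s <= 1 -> hnorm (w s) <= B.
Proof.
  intros. apply norm_le_sq. apply B_ge0. unfold B. rewrite sqrt_sqrt.
  apply E1; auto. pose proof (hinner_ge0 _ (w 0)). unfold N2. lra.
Qed.

Lemma E2 c : 0 < c -> 2 * G * c <= 1 -> N2 c <= hinner (w 0) (w (2 * c)) + 2 * G * B * c.
Proof.
  intros Hc HGc. pose proof G_ge0 as HG. pose proof B_ge0 as HB.
  set (F := fun a => hinner (we (-1 * a + c)) (we (1 * a + c)) + (2 * G * B) * a).
  assert (M: F 0 <= F c).
  { apply (mono F (fun a => (hinner (hscal (-1) (wd (-1 * a + c))) (we (1 * a + c)) +
       hinner (we (-1 * a + c)) (hscal 1 (wd (1 * a + c)))) + 2 * G * B)).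
    - lra.
    - intros a _. unfold F. apply cpt_plus; [|apply cpt_lin].
      apply ip_cont; apply hc_aff; apply we_hc.
    - intros a Ha. unfold F. apply dpl_plus; [|apply dpl_lin].
      apply (ip_deriv (fun a => we (-1 * a + c)) (fun a => we (1 * a + c))).
      apply hd_aff. lra. apply we_hd. lra.
      apply hd_aff. lra. apply we_hd. lra.
    - intros a Ha. rewrite !we_eq by lra. unfold wd. ipexp.
      rewrite HTs.
      pose proof (cs g (w (1 * a + c))). pose proof (cs (w (-1 * a + c)) g).
      pose proof (Rle_abs (hinner g (w (1 * a + c)))).
      pose proof (Rle_abs (- hinner (w (-1 * a + c)) g)). rewrite Rabs_Ropp in H3.
      assert (hnorm (w (1 * a + c)) <= B) by (apply wB; nra).
      assert (hnorm (w (-1 * a + c)) <= B) by (apply wB; nra).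
      assert (hnorm g * hnorm (w (1 * a + c)) <= G * B) by (apply Rmult_le_compat; auto; apply hnorm_ge0).
      assert (hnorm (w (-1 * a + c)) * hnorm g <= B * G) by (apply Rmult_le_compat; auto; apply hnorm_ge0).
      nra. }
  unfold F in M.
  replace (-1 * 0 + c) with c in M by ring. replace (1 * 0 + c) with c in M by ring.
  replace (-1 * c + c) with 0 in M by ring. replace (1 * c + c) with (2 * c) in M by ring.
  rewrite !we_eq in M by lra. unfold N2. lra.
Qed.

Lemma E2' s t : 0 <= s <= t -> G * t <= 1 -> N2 t <= N2 s + 2 * G * B * (t - s).
Proof.
  intros Hst HGt. pose proof G_ge0 as HG. pose proof B_ge0 as HB.
  set (F := fun a => (2 * G * B) * a + - hinner (we a) (we a)).
  assert (M: F s <= F t).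
  { apply (mono F (fun a => 2 * G * B + - (2 * (- hinner (T (w a)) (w a) + hinner g (w a))))).
    - lra.
    - intros a _. unfold F. apply cpt_plus. apply cpt_lin. apply cpt_opp. apply cont_N2.
    - intros a Ha. unfold F. apply dpl_plus. apply dpl_lin. apply dpl_opp. apply deriv_N2. lra.
    - intros a Ha. pose proof (HTn (w a)). pose proof (gw_bound a).
      assert (hnorm (w a) <= B) by (apply wB; nra).
      assert (G * hnorm (w a) <= G * B) by (apply Rmult_le_compat_l; auto). nra. }
  unfold F in M. rewrite !we_eq in M by lra. unfold N2. lra.
Qed.

Lemma E3 t z : 0 < t -> 2 * G * t <= 1 ->
  N2 t * t <= hnorm z * B + (2 * G * B * t + hnorm (hsub (w 0) (T z)) * B + hnorm z * G) * t.
Proof.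
  intros Ht HGt. pose proof G_ge0 as HG. pose proof B_ge0 as HB.
  set (r := hsub (w 0) (T z)).
  set (K := N2 t - 2 * G * B * t - hnorm r * B - hnorm z * G).
  set (F := fun s => (-1/2) * hinner z (we (2 * s + 0)) + (- K) * s).
  assert (M: F 0 <= F t).
  { apply (mono F (fun s => (0 * hinner z (we (2 * s + 0)) + (-1/2) *
        (hinner hzero (we (2 * s + 0)) + hinner z (hscal 2 (wd (2 * s + 0))))) + - K)).
    - lra.
    - intros a _. unfold F. apply cpt_plus; [|apply cpt_lin].
      apply (cpt_mult (fun _ => -1/2) (fun s => hinner z (we (2 * s + 0)))). apply cpt_const.
      apply (ip_cont (fun _ => z) (fun s => we (2 * s + 0))). apply hc_const. apply hc_aff, we_hc.
    - intros a Ha. unfold F. apply dpl_plus; [|apply dpl_lin].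
      apply (dpl_mult (fun _ => -1/2) (fun s => hinner z (we (2 * s + 0)))). apply dpl_const.
      apply (ip_deriv (fun _ => z) (fun s => we (2 * s + 0))). apply hd_const.
      apply hd_aff. lra. apply we_hd. lra.
    - intros a Ha. replace (2 * a + 0) with (2 * a) by ring. rewrite !we_eq by lra. unfold wd. ipexp.
      rewrite <- HTs.
      assert (Er: hinner r (w (2 * a)) = hinner (w 0) (w (2 * a)) - hinner (T z) (w (2 * a))) by (unfold r; ipexp; ring).
      pose proof (cs1 r (w (2 * a))). pose proof (cs1 z g).
      assert (hnorm (w (2 * a)) <= B) by (apply wB; nra).
      assert (hnorm r * hnorm (w (2 * a)) <= hnorm r * B) by (apply Rmult_le_compat_l; auto; apply hnorm_ge0).
      assert (hnorm z * hnorm g <= hnorm z * G) by (apply Rmult_le_compat_l; auto; apply hnorm_ge0).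
      pose proof (E2 a ltac:(lra) ltac:(nra)). pose proof (E2' a t ltac:(lra) ltac:(nra)).
      unfold K. nra. }
  unfold F in M. replace (2 * 0 + 0) with 0 in M by ring. replace (2 * t + 0) with (2 * t) in M by ring.
  rewrite !we_eq in M by lra.
  pose proof (cs1 z (w 0)). pose proof (cs2 z (w (2 * t))).
  assert (hnorm (w 0) <= B) by (apply wB; lra).
  assert (hnorm (w (2 * t)) <= B) by (apply wB; nra).
  pose proof (hnorm_ge0 z).
  assert (hnorm z * hnorm (w 0) <= hnorm z * B) by (apply Rmult_le_compat_l; auto).
  assert (hnorm z * hnorm (w (2*t)) <= hnorm z * B) by (apply Rmult_le_compat_l; auto).
  unfold K in M. fold r. nra.
Qed.
End ODE.

Section Dens.
Context {H : HilbertSpace}.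
Variable T : H -> H.
Hypothesis HTadd : forall x y, T (hadd x y) = hadd (T x) (T y).
Hypothesis HTscal : forall a x, T (hscal a x) = hscal a (T x).
Hypothesis HTs : forall x y, hinner (T x) y = hinner x (T y).
Variable w0 : H.
Hypothesis Hortho : forall e, T e = hzero -> hinner w0 e = 0.

Lemma sq_le a b : 0 <= a -> a <= b -> a * a <= b * b.
Proof. intros; nra. Qed.

Lemma dense : forall eta, 0 < eta -> exists z, hnorm (hsub w0 (T z)) < eta.
Proof.
  set (E := fun x => exists z, x = - hnorm (hsub w0 (T z))).
  assert (Eb: bound E).
  { exists 0. intros x [z ->]. pose proof (hnorm_ge0 (hsub w0 (T z))). lra. }
  assert (En: exists x, E x) by (exists (- hnorm (hsub w0 (T hzero))); exists hzero; auto).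
  destruct (completeness E Eb En) as [m [Hub Hlub]].
  set (d := - m).
  assert (Hlow: forall z, d <= hnorm (hsub w0 (T z))).
  { intros z. assert (E (- hnorm (hsub w0 (T z)))) by (exists z; auto). apply Hub in H0. unfold d; lra. }
  assert (Happ: forall eps, 0 < eps -> exists z, hnorm (hsub w0 (T z)) < d + eps).
  { intros eps He. apply NNPP. intro Hn.
    assert (m <= m - eps).
    { apply Hlub. intros x [z ->]. apply Rnot_gt_le. intro Hx. apply Hn. exists z. unfold d. lra. }
    lra. }
  assert (Hd0: 0 <= d).
  { assert (m <= 0). { apply Hlub. intros x [z ->]. pose proof (hnorm_ge0 (hsub w0 (T z))). lra. }
    unfold d; lra. }
  assert (Hd: d = 0).
  { assert (seq: forall n : nat, {z | hnorm (hsub w0 (T z)) < d + / (INR n + 1)}).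
    { intros n. apply constructive_indefinite_description. apply Happ.
      apply Rinv_0_lt_compat. pose proof (pos_INR n). lra. }
    set (zs := fun n => proj1_sig (seq n)).
    set (e := fun n => hsub w0 (T (zs n))).
    assert (He: forall n, hnorm (e n) < d + / (INR n + 1)) by (intros n; exact (proj2_sig (seq n))).
    assert (He0: forall n, d <= hnorm (e n)) by (intros; apply Hlow).
    assert (Heps: forall n N, (N <= n)%nat -> / (INR n + 1) <= / (INR N + 1)).
    { intros n N Hn. apply Rinv_le_contravar. pose proof (pos_INR N); lra.
      apply le_INR in Hn. lra. }
    assert (Hcauchy: forall n k, hinner (hsub (e n) (e k)) (hsub (e n) (e k)) <=
         2 * ((d + / (INR n + 1)) * (d + / (INR n + 1))) + 2 * ((d + / (INR k + 1)) * (d + / (INR k + 1))) - 4 * (d * d)).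
    { intros n k.
      assert (Mid: hscal (1/2) (hadd (e n) (e k)) = hsub w0 (T (hscal (1/2) (hadd (zs n) (zs k))))).
      { unfold e. rewrite HTscal, HTadd. apply veq; intro; ipexp; field. }
      pose proof (Hlow (hscal (1/2) (hadd (zs n) (zs k)))). rewrite <- Mid in H0.
      pose proof (sq_le _ _ Hd0 H0). rewrite hnorm_sq in H1.
      pose proof (sq_le _ _ (hnorm_ge0 _) (Rlt_le _ _ (He n))). rewrite hnorm_sq in H2.
      pose proof (sq_le _ _ (hnorm_ge0 _) (Rlt_le _ _ (He k))). rewrite hnorm_sq in H3.
      ipexp_in H1. ipexp. rewrite (hinnerC _ (e k) (e n)) in *. lra. }
    destruct (hcomplete H e) as [l Hl].
    { intros eps Heps0.
      destruct (archimed_cor1 (eps * eps / (8 * d + 4)) ltac:(apply Rdiv_lt_0_compat; nra)) as [N [HN HN0]].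
      exists N. intros n k Hn Hk.
      apply (norm_lt_sq (hsub (e n) (e k))). lra.
      eapply Rle_lt_trans. apply Hcauchy.
      pose proof (Heps n N Hn). pose proof (Heps k N Hk).
      assert (/ (INR N + 1) <= / INR N).
      { apply Rinv_le_contravar. apply lt_0_INR; auto. lra. }
      assert (0 < / (INR n + 1)) by (apply Rinv_0_lt_compat; pose proof (pos_INR n); lra).
      assert (0 < / (INR k + 1)) by (apply Rinv_0_lt_compat; pose proof (pos_INR k); lra).
      assert (/ (INR N + 1) <= 1).
      { rewrite <- Rinv_1. apply Rinv_le_contravar. lra. pose proof (pos_INR N); lra. }
      assert (Hx: eps * eps / (8 * d + 4) * (8 * d + 4) = eps * eps) by (field; lra).
      nra. }
    assert (Hl': forall eps, 0 < eps -> exists N, forall n, (N <= n)%nat -> hnorm (hsub (e n) l) < eps) by exact Hl.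
    clear Hl.
    assert (Ha: forall z s, d <= hnorm (hsub l (hscal s (T z)))).
    { intros z s. apply Rnot_gt_le. intro Hc.
      destruct (Hl' (d - hnorm (hsub l (hscal s (T z)))) ltac:(lra)) as [N HN].
      specialize (HN N (le_n N)).
      pose proof (Hlow (hadd (zs N) (hscal s z))).
      assert (Id: hsub w0 (T (hadd (zs N) (hscal s z))) = hadd (hsub (e N) l) (hsub l (hscal s (T z)))).
      { rewrite HTadd, HTscal. unfold e. apply veq; intro; ipexp; ring. }
      rewrite Id in H0. pose proof (tri (hsub (e N) l) (hsub l (hscal s (T z)))). lra. }
    assert (Hb: hnorm l <= d).
    { apply Rnot_gt_le. intro Hc.
      destruct (archimed_cor1 ((hnorm l - d) / 2) ltac:(lra)) as [N1 [HN1 HN10]].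
      destruct (Hl' ((hnorm l - d) / 2) ltac:(lra)) as [N HN].
      specialize (HN (max N N1) (Nat.le_max_l _ _)).
      pose proof (He (max N N1)). pose proof (Heps _ _ (Nat.le_max_r N N1)).
      assert (/ (INR N1 + 1) <= / INR N1).
      { apply Rinv_le_contravar. apply lt_0_INR; auto. lra. }
      pose proof (tri_sub l (e (max N N1))).
      assert (Ec: hnorm (hsub l (e (max N N1))) = hnorm (hsub (e (max N N1)) l)).
      { assert (hsub l (e (max N N1)) = hopp (hsub (e (max N N1)) l)) by (apply veq; intro; ipexp; ring).
        rewrite H4, norm_opp. auto. }
      lra. }
    assert (Hc: forall z, hinner l (T z) = 0).
    { intros z. set (c := hinner l (T z)). set (Nz := hinner (T z) (T z)).
      assert (Q: forall s, 0 <= - 2 * s * c + s * s * Nz).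
      { intros s. pose proof (Ha z s). pose proof (sq_le _ _ (hnorm_ge0 l) (Rle_trans _ _ _ Hb H0)).
        rewrite !hnorm_sq in H1. ipexp_in H1. unfold c, Nz. rewrite (hinnerC _ (T z) l) in H1. nra. }
      assert (0 <= Nz) by apply hinner_ge0.
      specialize (Q (c / (Nz + 1))).
      replace (- 2 * (c / (Nz + 1)) * c + c / (Nz + 1) * (c / (Nz + 1)) * Nz)
        with (- (c * c) * (Nz + 2) / ((Nz + 1) * (Nz + 1))) in Q by (field; lra).
      assert (0 < (Nz + 1) * (Nz + 1)) by nra.
      assert (0 <= - (c * c) * (Nz + 2)).
      { apply Rmult_le_compat_r with (r := (Nz + 1) * (Nz + 1)) in Q; [|lra].
        replace (- (c * c) * (Nz + 2) / ((Nz + 1) * (Nz + 1)) * ((Nz + 1) * (Nz + 1))) with (- (c * c) * (Nz + 2)) in Q by (field; lra).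
        lra. }
      nra. }
    assert (HTl: T l = hzero).
    { apply hinner_eq0. rewrite HTs. apply Hc. }
    assert (Hw0l: hinner l w0 = 0) by (rewrite hinnerC; apply Hortho; auto).
    assert (Hl0: hnorm l = 0).
    { pose proof (hnorm_ge0 l). apply Rle_antisym; auto. apply Rnot_gt_le. intro Hpos.
      destruct (Hl' (hnorm l / 2) ltac:(lra)) as [N HN]. specialize (HN N (le_n N)).
      assert (Ec: hnorm (hsub l (e N)) = hnorm (hsub (e N) l)).
      { assert (hsub l (e N) = hopp (hsub (e N) l)) by (apply veq; intro; ipexp; ring).
        rewrite H1, norm_opp. auto. }
      assert (Id: hinner l l = hinner l (hsub l (e N))).
      { unfold e. ipexp. rewrite Hw0l, Hc. ring. }
      pose proof (cs1 l (hsub l (e N))). rewrite <- hnorm_sq in Id.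
      assert (hnorm l * hnorm (hsub l (e N)) <= hnorm l * (hnorm l / 2)) by (apply Rmult_le_compat_l; lra).
      nra. }
    pose proof (Ha hzero 0).
    assert (hsub l (hscal 0 (T hzero)) = l) by (apply veq; intro; ipexp; ring).
    rewrite H1 in H0. lra. }
  intros eta Heta. destruct (Happ eta Heta) as [z Hz]. exists z. lra.
Qed.
End Dens.

Lemma opp_scal {H : HilbertSpace} (x : H) : hopp x = hscal (-1) x.
Proof. apply veq; intro; ipexp; ring. Qed.

Lemma lin_sub {H : HilbertSpace} (A : H -> H) :
  (forall x y, A (hadd x y) = hadd (A x) (A y)) -> (forall a x, A (hscal a x) = hscal a (A x)) ->
  forall x y, A (hsub x y) = hsub (A x) (A y).
Proof. intros Ha Hs x y. unfold hsub. rewrite Ha, !opp_scal, Hs. reflexivity. Qed.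

Lemma second_part (C gamma : R) : 0 < C -> 0 < gamma < 1 ->
  (forall delta, 0 < delta -> 0 < C * Rpower delta (- gamma)) /\
  lim0_to_infty (fun delta => C * Rpower delta (- gamma)) /\
  lim0_to_0 (fun delta => C * Rpower delta (- gamma) * delta).
Proof.
  intros HC Hg. unfold Rpower. split; [|split].
  - intros. pose proof (exp_pos (- gamma * ln delta)). nra.
  - intros M. set (K := Rmax 1 (M / C)).
    assert (HK: 1 <= K) by apply Rmax_l. assert (HK2: M / C <= K) by apply Rmax_r.
    exists (exp (- ln K / gamma)). split. apply exp_pos.
    intros delta [Hd0 Hd]. apply ln_increasing in Hd; auto. rewrite ln_exp in Hd.
    assert (ln K < - gamma * ln delta).
    { apply Rmult_lt_compat_l with (r := gamma) in Hd; [|lra].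
      replace (gamma * (- ln K / gamma)) with (- ln K) in Hd by (field; lra). lra. }
    apply exp_increasing in H. rewrite exp_ln in H by lra.
    assert (M <= C * K).
    { apply Rmult_le_compat_l with (r := C) in HK2; [|lra].
      replace (C * (M / C)) with M in HK2 by (field; lra). lra. }
    nra.
  - intros eps He. exists (exp (ln (eps / C) / (1 - gamma))). split. apply exp_pos.
    intros delta [Hd0 Hd]. apply ln_increasing in Hd; auto. rewrite ln_exp in Hd.
    assert ((1 - gamma) * ln delta < ln (eps / C)).
    { apply Rmult_lt_compat_l with (r := 1 - gamma) in Hd; [|lra].
      replace ((1 - gamma) * (ln (eps / C) / (1 - gamma))) with (ln (eps / C)) in Hd by (field; lra). lra. }
    apply exp_increasing in H. rewrite exp_ln in H by (apply Rdiv_lt_0_compat; lra).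
    assert (E: C * exp (- gamma * ln delta) * delta = C * exp ((1 - gamma) * ln delta)).
    { transitivity (C * (exp (- gamma * ln delta) * exp (ln delta))).
      rewrite exp_ln by lra. ring. rewrite <- exp_plus. f_equal. f_equal. ring. }
    rewrite E. pose proof (exp_pos ((1 - gamma) * ln delta)).
    rewrite Rabs_right by nra.
    apply Rmult_lt_compat_l with (r := C) in H; [|lra].
    replace (C * (eps / C)) with eps in H by (field; lra). lra.
Qed.

Theorem theorem2 (H : HilbertSpace) (A P : H -> H) (f y u0 : H)
    (fd : R -> H) (u : R -> R -> H) :
  bounded_linear A ->
  A y = f -> orth y (nullsp A) ->
  bounded_linear P ->
  selfadjoint (fun x => P (A x)) ->
  nonneg_op (fun x => P (A x)) ->
  (forall z, nullsp (fun x => P (A x)) z <-> nullsp A z) ->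
  orth (hsub u0 y) (nullsp A) ->
  (forall delta, 0 < delta -> hnorm (hsub (fd delta) f) <= delta) ->
  (forall delta, 0 < delta -> solves_ode P A (fd delta) u0 (u delta)) ->
  (forall td : R -> R,
     (forall delta, 0 < delta -> 0 < td delta) ->
     lim0_to_infty td ->
     lim0_to_0 (fun delta => td delta * delta) ->
     lim0_to_0 (fun delta => hnorm (hsub (u delta (td delta)) y)))
  /\
  (forall C gamma, 0 < C -> 0 < gamma < 1 ->
     lim0_to_0 (fun delta =>
       hnorm (hsub (u delta (C * Rpower delta (- gamma))) y))).
Proof.
  intros HA Hy _ HP HTs HTn HN Horth Hfd Hsol.
  destruct HA as [HAadd [HAscal _]]. destruct HP as [HPadd [HPscal [MP0 HMP0]]].
  set (MP := Rmax MP0 1).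
  assert (HMP1: 1 <= MP) by apply Rmax_r.
  assert (HMP: forall x, hnorm (P x) <= MP * hnorm x).
  { intros x. eapply Rle_trans. apply HMP0. apply Rmult_le_compat_r. apply hnorm_ge0. apply Rmax_l. }
  set (T := fun x => P (A x)).
  assert (HTadd: forall x y, T (hadd x y) = hadd (T x) (T y)) by (intros; unfold T; rewrite HAadd, HPadd; auto).
  assert (HTscal: forall a x, T (hscal a x) = hscal a (T x)) by (intros; unfold T; rewrite HAscal, HPscal; auto).
  set (w0 := hsub u0 y).
  assert (Hortho: forall e, T e = hzero -> hinner w0 e = 0).
  { intros e He. apply Horth. apply HN. exact He. }
  set (B0 := sqrt (3 * (1 + hinner w0 w0))).
  assert (HB0: 0 < B0).
  { unfold B0. apply sqrt_lt_R0. pose proof (hinner_ge0 _ w0). lra. }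
  assert (main1: forall td : R -> R,
     (forall delta, 0 < delta -> 0 < td delta) ->
     lim0_to_infty td ->
     lim0_to_0 (fun delta => td delta * delta) ->
     lim0_to_0 (fun delta => hnorm (hsub (u delta (td delta)) y))).
  { intros td Htd0 Htdinf Htdlim eps He.
    assert (He2: 0 < eps * eps) by nra.
    destruct (dense T HTadd HTscal HTs w0 Hortho (eps * eps / (5 * B0)) ltac:(apply Rdiv_lt_0_compat; lra))
      as [z Hz].
    pose proof (hnorm_ge0 z) as Hz0.
    destruct (Htdinf (5 * hnorm z * B0 / (eps * eps))) as [d1 [Hd1 Q1]].
    set (e2 := Rmin (1 / (2 * MP)) (eps * eps / (10 * MP * B0))).
    assert (He2p: 0 < e2) by (apply Rmin_pos; apply Rdiv_lt_0_compat; nra).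
    destruct (Htdlim e2 He2p) as [d2 [Hd2 Q2]].
    set (d3 := eps * eps / (5 * MP * (hnorm z + 1))).
    assert (Hd3: 0 < d3) by (apply Rdiv_lt_0_compat; nra).
    exists (Rmin d1 (Rmin d2 d3)). split. repeat apply Rmin_pos; auto.
    intros delta [Hdl Hdu].
    pose proof (Rmin_l d1 (Rmin d2 d3)). pose proof (Rmin_r d1 (Rmin d2 d3)).
    pose proof (Rmin_l d2 d3). pose proof (Rmin_r d2 d3).
    specialize (Q1 delta ltac:(lra)). specialize (Q2 delta ltac:(lra)).
    set (t := td delta) in *. pose proof (Htd0 delta Hdl) as Ht. fold t in Ht.
    set (G := MP * delta). set (g := P (hsub (fd delta) f)).
    assert (Hg: hnorm g <= G).
    { unfold g, G. eapply Rle_trans. apply HMP. apply Rmult_le_compat_l. lra. apply Hfd; auto. }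
    set (w := fun s => hsub (u delta s) y).
    destruct (Hsol delta Hdl) as [Hu0 Hud].
    assert (Hw: forall s, 0 <= s -> has_deriv_on_nonneg w s (hadd (hopp (T (w s))) g)).
    { intros s Hs eps' He'. destruct (Hud s Hs eps' He') as [dd [Hdd Q]].
      exists dd. split; auto. intros h Hh Hhd Hsh.
      assert (Ev: hadd (hopp (T (w s))) g = hopp (P (hsub (A (u delta s)) (fd delta)))).
      { unfold T, w, g. rewrite !(lin_sub A HAadd HAscal), !(lin_sub P HPadd HPscal), ?Hy, ?(lin_sub P HPadd HPscal).
        apply veq; intro; ipexp; ring. }
      assert (Ew: hsub (w (s + h)) (w s) = hsub (u delta (s + h)) (u delta s)).
      { unfold w. apply veq; intro; ipexp; ring. }
      rewrite Ev, Ew. apply Q; auto. }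
    assert (HGt: 2 * G * t <= 1).
    { unfold G. rewrite Rabs_right in Q2 by nra.
      assert (Hm: e2 <= 1 / (2 * MP)) by apply Rmin_l.
      assert (X: MP * (t * delta) <= MP * (1 / (2 * MP))) by (apply Rmult_le_compat_l; lra).
      replace (MP * (1 / (2 * MP))) with (1/2) in X by (field; lra). nra. }
    pose proof (E3 T g G w HTs HTn Hg Hw t z Ht HGt) as M.
    assert (EB: B w = B0) by (unfold B, N2, w, B0, w0; rewrite Hu0; auto).
    assert (Ew0: w 0 = w0) by (unfold w, w0; rewrite Hu0; auto).
    rewrite EB, Ew0 in M.
    assert (b1: hnorm z * B0 < eps * eps / 5 * t).
    { assert (5 * hnorm z * B0 / (eps * eps) * (eps * eps / 5) = hnorm z * B0) by (field; lra).
      assert (5 * hnorm z * B0 / (eps * eps) * (eps * eps / 5) < t * (eps * eps / 5)) by (apply Rmult_lt_compat_r; lra).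
      lra. }
    assert (b2: 2 * G * B0 * t < eps * eps / 5).
    { unfold G. rewrite Rabs_right in Q2 by nra.
      assert (Hm: e2 <= eps * eps / (10 * MP * B0)) by apply Rmin_r.
      assert (X: 2 * MP * B0 * (t * delta) < 2 * MP * B0 * (eps * eps / (10 * MP * B0))) by (apply Rmult_lt_compat_l; nra).
      replace (2 * MP * B0 * (eps * eps / (10 * MP * B0))) with (eps * eps / 5) in X by (field; lra).
      nra. }
    assert (b3: hnorm (hsub w0 (T z)) * B0 < eps * eps / 5).
    { apply Rmult_lt_compat_r with (r := B0) in Hz; auto.
      replace (eps * eps / (5 * B0) * B0) with (eps * eps / 5) in Hz by (field; lra). lra. }
    assert (b4: hnorm z * G < eps * eps / 5).
    { unfold G. assert (delta < d3) by lra.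
      assert (hnorm z * MP * delta <= hnorm z * MP * d3) by (apply Rmult_le_compat_l; nra).
      assert (hnorm z * MP * d3 < eps * eps / 5).
      { unfold d3. replace (hnorm z * MP * (eps * eps / (5 * MP * (hnorm z + 1)))) with
          (eps * eps / 5 * (hnorm z / (hnorm z + 1))) by (field; lra).
        assert (hnorm z / (hnorm z + 1) < 1) by (apply (Rmult_lt_reg_r (hnorm z + 1)); [lra|];
           replace (hnorm z / (hnorm z + 1) * (hnorm z + 1)) with (hnorm z) by (field; lra); lra).
        nra. }
      nra. }
    assert (Hfin: N2 w t < eps * eps).
    { assert (N2 w t * t < eps * eps * t) by nra. nra. }
    rewrite Rabs_right by (apply Rle_ge, hnorm_ge0).
    apply norm_lt_sq. lra. exact Hfin. }
  split. exact main1.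
  intros C gamma HC Hg. destruct (second_part C gamma HC Hg) as [S1 [S2 S3]].
  exact (main1 _ S1 S2 S3).
Qed.
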